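(* Let $R$ be a principal Artinian ring, let $f, g \in R[x]$ with $g$ of positive degree and invertible leading coefficient, let $c = c(f)$ be a generator of the content ideal of $f$, and let $h \in R[x]$ satisfy $f = c\cdot h$. Put $\bar R = R/\mathrm{Ann}(c)$ and let $\bar h, \bar g$ be the images of $h, g$ in $\bar R[x]$. Then $$\mathrm{Rres}_R(f,g) = \{\, c s : s \in R,\ (s \bmod \mathrm{Ann}(c)) \in \mathrm{Rres}_{\bar R}(\bar h, \bar g)\,\},$$ i.e. $\mathrm{rres}_R(f,g) = c\cdot \mathrm{rres}_{R/\mathrm{Ann}(c)}(h,g)$.
   Context: A principal Artinian ring is a commutative ring with identity in which every ideal is principal and which satisfies the descending chain condition on ideals. For $f = \sum a_i x^i$, the content ideal is $C(f) = (a_0,\dots,a_d)$ and $c(f)$ is any generator of it. $\mathrm{Ann}(c) = \{s \in R : sc = 0\}$. For a commutative ring $S$ and $f,g\in S[x]$, $\mathrm{Rres}_S(f,g) = (f,g)\cap S$, where $(f,g)$ is the ideal of $S[x]$ generated by $f,g$; $\mathrm{rres}_S(f,g)$ denotes a generator of it (for a quotient ring, a lift of a generator to $R$). *)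

(* Defs.v *)
From HB Require Import structures.
From mathcomp Require Import all_boot all_order all_algebra.
Set Implicit Arguments. Unset Strict Implicit. Unset Printing Implicit Defensive.
Import GRing.Theory.
Local Open Scope ring_scope.

Definition is_ideal (R : comNzRingType) (I : R -> Prop) : Prop :=
  [/\ I 0, (forall x y, I x -> I y -> I (x + y)) & (forall r x, I x -> I (r * x))].

Definition generates (R : comNzRingType) (a : R) (I : R -> Prop) : Prop :=
  forall x, I x <-> exists r : R, x = r * a.

Definition principal_artinian (R : comNzRingType) : Prop :=
  (forall I : R -> Prop, is_ideal I -> exists a : R, generates a I) /\
  (forall I : nat -> R -> Prop,
      (forall n, is_ideal (I n)) ->
      (forall n x, I n.+1 x -> I n x) ->
      exists N, forall n, (N <= n)%N -> forall x, I n x <-> I N x).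

Definition content_ideal (R : comNzRingType) (f : {poly R}) : R -> Prop :=
  fun x => exists r : 'I_(size f) -> R, x = \sum_(i < size f) r i * f`_i.

Definition Ann (R : comNzRingType) (c : R) : R -> Prop := fun s => s * c = 0.

Definition Rres (R : comNzRingType) (f g : {poly R}) : R -> Prop :=
  fun r => exists u v : {poly R}, u * f + v * g = r%:P.

(* Membership of (s mod Ann(c)) in Rres_{R/Ann(c)}(hbar, gbar), expressed via
   lifts: polynomials over R/Ann(c) are represented by polynomials over R, and
   two of them are equal in (R/Ann(c))[x] iff every coefficient of their
   difference lies in Ann(c). *)
Definition eq_mod_Ann (R : comNzRingType) (c : R) (p q : {poly R}) : Prop :=
  forall i, Ann c (p - q)`_i.

Definition Rres_mod_Ann (R : comNzRingType) (c : R) (h g : {poly R}) : R -> Prop :=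
  fun s => exists u v : {poly R}, eq_mod_Ann c (u * h + v * g) s%:P.

(* Main.v *)
Require Import Defs.
From HB Require Import structures.
From mathcomp Require Import all_boot all_order all_algebra.
From mathcomp Require Import zify ring.
Import GRing.Theory.
Local Open Scope ring_scope.

Section Key.
Variables (R : comNzRingType) (c r b : R) (g : {poly R}).
Hypothesis (Hg : (1 < size g)%N) (Hb : lead_coef g * b = 1).

Lemma key n (v : {poly R}) : (size v <= n)%N ->
  (exists q, v * g - r%:P = c *: q) -> exists q, v = c *: q.
Proof.
elim: n v => [|n IH] v.
  rewrite leqn0 size_poly_eq0 => /eqP -> _; exists 0; by rewrite scaler0.
move=> Hs [q Hq].
have [-> | vnz] := eqVneq v 0; first by exists 0; rewrite scaler0.
set m := (size v).-1.
set a := lead_coef v.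
have Hk : (0 < (size v + size g).-2)%N.
  have : (0 < size v)%N by rewrite size_poly_gt0.
  move: Hg => Hg' Hv; lia.
have Ha : a = (q`_((size v + size g).-2) * b) * c.
  have := congr1 (fun p : {poly R} => p`_((size v + size g).-2)) Hq.
  rewrite /= coefB coefC -mul_lead_coef coefZ.
  rewrite (negbTE (lt0n_neq0 Hk)) subr0 => E.
  rewrite -[a]mulr1 -Hb mulrA [a * _]E; ring.
set t := q`_((size v + size g).-2) * b in Ha.
set w := v - a *: 'X^m.
have Hw : w = take_poly m v.
  apply/polyP => i; rewrite /w coefB coefZ coefXn coef_take_poly.
  case: ltngtP => Him.
  - by rewrite mulr0 subr0.
  - rewrite mulr0 subr0 nth_default //.
    by rewrite /m in Him; rewrite (leq_trans _ Him) // -ltnS prednK // size_poly_gt0.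
  - by rewrite Him mulr1 subrr.
have [q' Hq'] : exists q', w = c *: q'.
  apply: (IH w).
    rewrite Hw; apply: leq_trans (size_take_poly _ _) _.
    by rewrite /m -ltnS prednK // size_poly_gt0.
  exists (q - t *: ('X^m * g)).
  rewrite /w mulrBl -addrA (addrC (- _)) addrA Hq scalerBr Ha.
  by rewrite -scalerAl scalerA mulrC.
exists (q' + t *: 'X^m).
by rewrite scalerDr -Hq' scalerA mulrC -Ha /w subrK.
Qed.
End Key.

Theorem lemma5p2 (R : comNzRingType) (HR : principal_artinian R)
  (f g h : {poly R}) (c : R) :
  (1 < size g)%N ->
  (exists b : R, lead_coef g * b = 1) ->
  generates c (content_ideal f) ->
  f = c *: h ->
  forall r : R, Rres f g r <-> exists s : R, Rres_mod_Ann c h g s /\ r = c * s.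
Proof.
move=> Hg [b Hb] _ Hf r; split.
  move=> [u [v Huv]].
  have [w Hw] : exists w, v = c *: w.
    apply: (@key R c r b g Hg Hb _ v (leqnn _)).
    exists (- (u * h)).
    rewrite -Huv Hf -scalerAr scalerN; ring.
  have Hr : r%:P = c *: (u * h + w * g).
    by rewrite -Huv Hf Hw scalerDr scalerAr scalerAl.
  set s := (u * h + w * g)`_0.
  have Hrs : r = c * s.
    by have := congr1 (fun p : {poly R} => p`_0) Hr; rewrite /= coefC coefZ.
  exists s; split => //.
  exists u, w => i; rewrite /Ann.
  have := congr1 (fun p : {poly R} => p`_i) Hr.
  rewrite /= coefZ coefB !coefC Hrs => E.
  rewrite mulrBl mulrC -E.
  by case: eqP => _; rewrite ?mul0r ?subrr // mulrC subrr.
move=> [s [[u [v Huv]] ->]].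
exists u, (c *: v).
rewrite Hf -scalerAr -scalerAl -scalerDr.
apply/polyP => i; have := Huv i; rewrite /Ann coefB => E.
rewrite coefZ coefC.
have : c * (u * h + v * g)`_i = c * (s%:P)`_i.
  by apply/eqP; rewrite -subr_eq0 -mulrBr mulrC E.
rewrite coefC => ->; case: eqP => _; by rewrite ?mulr0.
Qed.
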